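(* Let $\mathfrak{n}$ be the real $7$-dimensional Lie algebra with basis $e_1,\dots,e_7$ whose nonzero brackets (up to antisymmetry) are $[e_1,e_2]=e_4$, $[e_1,e_4]=e_6$, $[e_1,e_5]=-e_7$, $[e_1,e_6]=e_7$, $[e_2,e_3]=e_5$, $[e_2,e_5]=e_7$, $[e_3,e_4]=e_7$. Then $\mathfrak{n}$ is not an Einstein nilradical.
   Context: A real nilpotent Lie algebra $\mathfrak{n}$ is called an Einstein nilradical if it admits an inner product such that the left-invariant Riemannian metric it defines on the simply connected nilpotent Lie group with Lie algebra $\mathfrak{n}$ is a nilsoliton, i.e. its Ricci operator satisfies $\mathrm{Ric}=c\,\mathrm{Id}+D$ for some $c\in\mathbb{R}$ and some derivation $D$ of $\mathfrak{n}$. Brackets of basis elements not listed are zero. *)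

(* Defs.v *)
From HB Require Import structures.
From mathcomp Require Import all_boot all_order all_algebra.
From mathcomp Require Import reals.
Set Implicit Arguments. Unset Strict Implicit. Unset Printing Implicit Defensive.
Import Order.TTheory GRing.Theory Num.Theory.
Local Open Scope ring_scope.

(* An inner product on R^n is encoded by a basis F (rows of an invertible
   matrix), namely the unique inner product for which the rows of F are
   orthonormal; every inner product arises this way. *)

Section MetricLie.
Variables (R : realType) (n : nat).
Implicit Types (br : 'rV[R]_n -> 'rV[R]_n -> 'rV[R]_n) (F : 'M[R]_n).

Definition ip F (x y : 'rV[R]_n) : R :=
  ((x *m invmx F) *m (y *m invmx F)^T) 0 0.

(* matrix of ad x (row-vector convention: y *m admx x = [x, y]) *)
Definition admx br (x : 'rV[R]_n) : 'M[R]_n :=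
  \matrix_(i < n) br x (delta_mx 0 i).

Definition killing br (x y : 'rV[R]_n) : R := \tr (admx br x *m admx br y).

(* mean curvature vector H : <H, x> = tr (ad x) *)
Definition meancurv br F : 'rV[R]_n :=
  \sum_(i < n) (\tr (admx br (row i F))) *: row i F.

(* Ricci tensor of the left-invariant metric (Besse, Einstein Manifolds 7.38),
   computed with the orthonormal basis (row i F)_i:
   ric(X,Y) = -1/2 sum_i <[X,f_i],[Y,f_i]> - 1/2 B(X,Y)
              + 1/4 sum_{i,j} <[f_i,f_j],X><[f_i,f_j],Y>
              - 1/2 (<[H,X],Y> + <[H,Y],X>) *)
Definition ric br F (x y : 'rV[R]_n) : R :=
  - (1/2) * (\sum_(i < n) ip F (br x (row i F)) (br y (row i F)))
  - (1/2) * killing br x y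
  + (1/4) * (\sum_(i < n) \sum_(j < n)
               ip F (br (row i F) (row j F)) x * ip F (br (row i F) (row j F)) y)
  - (1/2) * (ip F (br (meancurv br F) x) y + ip F (br (meancurv br F) y) x).

(* Ricci operator: <Ric x, y> = ric(x, y) *)
Definition RicOp br F (x : 'rV[R]_n) : 'rV[R]_n :=
  \sum_(i < n) ric br F x (row i F) *: row i F.

Definition is_derivation br (D : 'M[R]_n) : Prop :=
  forall x y : 'rV[R]_n, br x y *m D = br (x *m D) y + br x (y *m D).

Definition nilsoliton br F : Prop :=
  exists (c : R) (D : 'M[R]_n), is_derivation br D /\
    forall x : 'rV[R]_n, RicOp br F x = c *: x + x *m D.

Definition einstein_nilradical br : Prop :=
  exists F : 'M[R]_n, F \in unitmx /\ nilsoliton br F.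

End MetricLie.

(* The specific 7-dimensional Lie algebra; e_k (k = 1..7) is basis vector index k-1. *)
Section N7.
Variable R : realType.

Definition ee (k : nat) : 'rV[R]_7 := delta_mx 0 (inord k.-1).

Definition n7b (i j : 'I_7) : 'rV[R]_7 :=
  match (nat_of_ord i).+1, (nat_of_ord j).+1 with
  | 1, 2 => ee 4 | 2, 1 => - ee 4
  | 1, 4 => ee 6 | 4, 1 => - ee 6
  | 1, 5 => - ee 7 | 5, 1 => ee 7
  | 1, 6 => ee 7 | 6, 1 => - ee 7
  | 2, 3 => ee 5 | 3, 2 => - ee 5
  | 2, 5 => ee 7 | 5, 2 => - ee 7
  | 3, 4 => ee 7 | 4, 3 => - ee 7
  | _, _ => 0
  end.

Definition n7br (x y : 'rV[R]_7) : 'rV[R]_7 :=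
  \sum_(i < 7) \sum_(j < 7) (x 0 i * y 0 j) *: n7b i j.

End N7.

(* Main.v *)
Require Import Defs.
From HB Require Import structures.
From mathcomp Require Import all_boot all_order all_algebra reals.
From mathcomp Require Import ring lra.
Set Implicit Arguments. Unset Strict Implicit. Unset Printing Implicit Defensive.
Import Order.TTheory GRing.Theory Num.Theory.
Local Open Scope ring_scope.


Section S.
Variable R : realType.

Definition o0 : 'I_7 := @Ordinal 7 0 isT.
Definition o1 : 'I_7 := @Ordinal 7 1 isT.
Definition o2 : 'I_7 := @Ordinal 7 2 isT.
Definition o3 : 'I_7 := @Ordinal 7 3 isT.
Definition o4 : 'I_7 := @Ordinal 7 4 isT.
Definition o5 : 'I_7 := @Ordinal 7 5 isT.
Definition o6 : 'I_7 := @Ordinal 7 6 isT.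

Lemma sum7 (F : 'I_7 -> R) :
  \sum_(i < 7) F i = F o0 + F o1 + F o2 + F o3 + F o4 + F o5 + F o6.
Proof.
rewrite !big_ord_recl big_ord0 addr0 !addrA.
by congr (_ + _ + _ + _ + _ + _ + _); congr F; apply: val_inj.
Qed.

Lemma ord7P (P : 'I_7 -> Prop) : P o0 -> P o1 -> P o2 -> P o3 -> P o4 -> P o5 -> P o6 ->
  forall i, P i.
Proof.
move=> H0 H1 H2 H3 H4 H5 H6 [[|[|[|[|[|[|[|k]]]]]]] Hk] //;
 try (by rewrite (bool_irrelevance Hk isT)).
Qed.

Definition brf (x y : 'rV[R]_7) (k : 'I_7) : R :=
  match nat_of_ord k with
  | 3 => x 0 o0 * y 0 o1 - x 0 o1 * y 0 o0
  | 4 => x 0 o1 * y 0 o2 - x 0 o2 * y 0 o1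
  | 5 => x 0 o0 * y 0 o3 - x 0 o3 * y 0 o0
  | 6 => - (x 0 o0 * y 0 o4 - x 0 o4 * y 0 o0) + (x 0 o0 * y 0 o5 - x 0 o5 * y 0 o0)
         + (x 0 o1 * y 0 o4 - x 0 o4 * y 0 o1) + (x 0 o2 * y 0 o3 - x 0 o3 * y 0 o2)
  | _ => 0
  end.


Lemma n7brE (x y : 'rV[R]_7) k : n7br x y 0 k = brf x y k.
Proof.
have e4 : ee R 4 = delta_mx 0 o3 by congr delta_mx; apply: val_inj; rewrite /= inordK.
have e5 : ee R 5 = delta_mx 0 o4 by congr delta_mx; apply: val_inj; rewrite /= inordK.
have e6 : ee R 6 = delta_mx 0 o5 by congr delta_mx; apply: val_inj; rewrite /= inordK.
have e7 : ee R 7 = delta_mx 0 o6 by congr delta_mx; apply: val_inj; rewrite /= inordK.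
rewrite /n7br summxE sum7.
rewrite !summxE !sum7 /n7b /= e4 e5 e6 e7.
move: k; apply: ord7P; rewrite /brf /= !mxE /=; ring.
Qed.

End S.


Section S.
Variable R : realType.

Lemma deq (D : 'M[R]_7) (Hder : is_derivation (@n7br R) D) a b m :
  (n7br (delta_mx 0 a) (delta_mx 0 b) *m D) 0 m =
  (n7br (delta_mx 0 a *m D) (delta_mx 0 b) + n7br (delta_mx 0 a) (delta_mx 0 b *m D)) 0 m.
Proof. by rewrite Hder. Qed.

Lemma der_struct (D : 'M[R]_7) : is_derivation (@n7br R) D ->
  (forall i k : 'I_7, (k < i)%N -> D i k = 0) /\
  (D o1 o1 = D o0 o0 /\ D o2 o2 = 2 * D o0 o0 /\ D o3 o3 = 2 * D o0 o0 /\
       D o4 o4 = 3 * D o0 o0 /\ D o5 o5 = 3 * D o0 o0 /\ D o6 o6 = 4 * D o0 o0).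
Proof.
move=> Hder.
have H246 := deq Hder o1 o3 o5.
rewrite -!rowE !(mxE, sum7, n7brE) /brf /= !mxE /= in H246.
have H122 := deq Hder o0 o1 o1.
rewrite -!rowE !(mxE, sum7, n7brE) /brf /= !mxE /= in H122.
have H144 := deq Hder o0 o3 o3.
rewrite -!rowE !(mxE, sum7, n7brE) /brf /= !mxE /= in H144.
have H156 := deq Hder o0 o4 o5.
rewrite -!rowE !(mxE, sum7, n7brE) /brf /= !mxE /= in H156.
have H166 := deq Hder o0 o5 o5.
rewrite -!rowE !(mxE, sum7, n7brE) /brf /= !mxE /= in H166.
have H234 := deq Hder o1 o2 o3.
rewrite -!rowE !(mxE, sum7, n7brE) /brf /= !mxE /= in H234.
have H134 := deq Hder o0 o2 o3.
rewrite -!rowE !(mxE, sum7, n7brE) /brf /= !mxE /= in H134.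
have H121 := deq Hder o0 o1 o0.
rewrite -!rowE !(mxE, sum7, n7brE) /brf /= !mxE /= in H121.
have H123 := deq Hder o0 o1 o2.
rewrite -!rowE !(mxE, sum7, n7brE) /brf /= !mxE /= in H123.
have H231 := deq Hder o1 o2 o0.
rewrite -!rowE !(mxE, sum7, n7brE) /brf /= !mxE /= in H231.
have H142 := deq Hder o0 o3 o1.
rewrite -!rowE !(mxE, sum7, n7brE) /brf /= !mxE /= in H142.
have H154 := deq Hder o0 o4 o3.
rewrite -!rowE !(mxE, sum7, n7brE) /brf /= !mxE /= in H154.
have H164 := deq Hder o0 o5 o3.
rewrite -!rowE !(mxE, sum7, n7brE) /brf /= !mxE /= in H164.
have H233 := deq Hder o1 o2 o2.
rewrite -!rowE !(mxE, sum7, n7brE) /brf /= !mxE /= in H233.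
have H141 := deq Hder o0 o3 o0.
rewrite -!rowE !(mxE, sum7, n7brE) /brf /= !mxE /= in H141.
have H143 := deq Hder o0 o3 o2.
rewrite -!rowE !(mxE, sum7, n7brE) /brf /= !mxE /= in H143.
have H145 := deq Hder o0 o3 o4.
rewrite -!rowE !(mxE, sum7, n7brE) /brf /= !mxE /= in H145.
have H151 := deq Hder o0 o4 o0.
rewrite -!rowE !(mxE, sum7, n7brE) /brf /= !mxE /= in H151.
have H152 := deq Hder o0 o4 o1.
rewrite -!rowE !(mxE, sum7, n7brE) /brf /= !mxE /= in H152.
have H153 := deq Hder o0 o4 o2.
rewrite -!rowE !(mxE, sum7, n7brE) /brf /= !mxE /= in H153.
have H155 := deq Hder o0 o4 o4.
rewrite -!rowE !(mxE, sum7, n7brE) /brf /= !mxE /= in H155.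
have H135 := deq Hder o0 o2 o4.
rewrite -!rowE !(mxE, sum7, n7brE) /brf /= !mxE /= in H135.
have H157 := deq Hder o0 o4 o6.
rewrite -!rowE !(mxE, sum7, n7brE) /brf /= !mxE /= in H157.
have H236 := deq Hder o1 o2 o5.
rewrite -!rowE !(mxE, sum7, n7brE) /brf /= !mxE /= in H236.
have H257 := deq Hder o1 o4 o6.
rewrite -!rowE !(mxE, sum7, n7brE) /brf /= !mxE /= in H257.
have H124 := deq Hder o0 o1 o3.
rewrite -!rowE !(mxE, sum7, n7brE) /brf /= !mxE /= in H124.
have H146 := deq Hder o0 o3 o5.
rewrite -!rowE !(mxE, sum7, n7brE) /brf /= !mxE /= in H146.
have H167 := deq Hder o0 o5 o6.
rewrite -!rowE !(mxE, sum7, n7brE) /brf /= !mxE /= in H167.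
have H235 := deq Hder o1 o2 o4.
rewrite -!rowE !(mxE, sum7, n7brE) /brf /= !mxE /= in H235.
have T21 : D o1 o0 = 0 by clear -H246; lra.
have T31 : D o2 o0 = 0 by clear -H122 H144 H156 H166 H234; lra.
have T32 : D o2 o1 = 0 by clear -H134; lra.
have T41 : D o3 o0 = 0 by clear -H121; lra.
have T42 : D o3 o1 = 0 by clear -H122; lra.
have T43 : D o3 o2 = 0 by clear -H123; lra.
have T51 : D o4 o0 = 0 by clear -H231; lra.
have T52 : D o4 o1 = 0 by clear -H142 H154 H164; lra.
have T53 : D o4 o2 = 0 by clear -H233; lra.
have T54 : D o4 o3 = 0 by clear -H122 H144 H156 H166; lra.
have T61 : D o5 o0 = 0 by clear -H141; lra.
have T62 : D o5 o1 = 0 by clear -H142; lra.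
have T63 : D o5 o2 = 0 by clear -H143; lra.
have T64 : D o5 o3 = 0 by clear -H122 H144; lra.
have T65 : D o5 o4 = 0 by clear -H145; lra.
have T71 : D o6 o0 = 0 by clear -H151; lra.
have T72 : D o6 o1 = 0 by clear -H152; lra.
have T73 : D o6 o2 = 0 by clear -H153; lra.
have T74 : D o6 o3 = 0 by clear -H142 H164; lra.
have T75 : D o6 o4 = 0 by clear -H155; lra.
have T76 : D o6 o5 = 0 by clear -H122 H144 H166; lra.
have T22 : D o1 o1 = D o0 o0 by clear -H135 H157 H236 H246 H257; lra.
have T33 : D o2 o2 = 2 * D o0 o0 by clear -H124 H135 H145 H146 H157 H167 H235 H236; lra.
have T44 : D o3 o3 = 2 * D o0 o0 by clear -H124 H135 H157 H236 H246 H257; lra.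
have T55 : D o4 o4 = 3 * D o0 o0 by clear -H124 H145 H146 H167 H246 H257; lra.
have T66 : D o5 o5 = 3 * D o0 o0 by clear -H124 H135 H146 H157 H236 H246 H257; lra.
have T77 : D o6 o6 = 4 * D o0 o0 by clear -H124 H135 H145 H146 H157 H167 H236 H246 H257; lra.
split; last by repeat split.
apply: (@ord7P (fun i => forall k : 'I_7, (k < i)%N -> D i k = 0));
apply: (@ord7P (fun k => (k < _)%N -> _)) => //= _; assumption.
Qed.
End S.


Section S.
Variable R : realType.
Local Notation br := (@n7br R).

Ltac rowtac := apply/rowP; apply: ord7P; rewrite !mxE !n7brE /brf /= ?mxE; ring.

Lemma brDr x y z : br x (y + z) = br x y + br x z. Proof. rowtac. Qed.
Lemma brDl x y z : br (y + z) x = br y x + br z x. Proof. rowtac. Qed.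
Lemma brZr a x y : br x (a *: y) = a *: br x y. Proof. rowtac. Qed.
Lemma brZl a x y : br (a *: y) x = a *: br y x. Proof. rowtac. Qed.
Lemma brN x y : br y x = - br x y. Proof. rowtac. Qed.
Lemma br0l x : br 0 x = 0. Proof. rowtac. Qed.

Lemma killing0 x y : killing br x y = 0.
Proof.
rewrite /killing /mxtrace sum7 !mxE !sum7 /admx !mxE !n7brE /brf /= !mxE /=; ring.
Qed.

Lemma trad0 x : \tr (admx br x) = 0.
Proof. rewrite /mxtrace sum7 /admx !mxE !n7brE /brf /= !mxE /=; ring. Qed.

Lemma meancurv0 (F : 'M[R]_7) : meancurv br F = 0.
Proof. by rewrite /meancurv big1 // => i _; rewrite trad0 scale0r. Qed.

Lemma ip0l (F : 'M[R]_7) (y : 'rV[R]_7) : ip F 0 y = 0.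
Proof. by rewrite /ip !mul0mx mxE. Qed.

Lemma ricE (F : 'M[R]_7) x y : ric br F x y =
  - (1/2) * (\sum_(i < 7) ip F (br x (row i F)) (br y (row i F)))
  + (1/4) * (\sum_(i < 7) \sum_(j < 7)
               ip F (br (row i F) (row j F)) x * ip F (br (row i F) (row j F)) y).
Proof. by rewrite /ric killing0 meancurv0 !br0l !ip0l; ring. Qed.

Lemma ipDl (F : 'M[R]_7) (x y z : 'rV[R]_7) : ip F (x + y) z = ip F x z + ip F y z.
Proof. by rewrite /ip !mulmxDl mxE. Qed.
Lemma ipZl (F : 'M[R]_7) a (x z : 'rV[R]_7) : ip F (a *: x) z = a * ip F x z.
Proof. by rewrite /ip -!scalemxAl mxE. Qed.
Lemma ipC (F : 'M[R]_7) (x y : 'rV[R]_7) : ip F x y = ip F y x.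
Proof. by rewrite /ip !mxE; apply: eq_bigr => i _; rewrite !mxE mulrC. Qed.
Lemma ipDr (F : 'M[R]_7) (x y z : 'rV[R]_7) : ip F z (x + y) = ip F z x + ip F z y.
Proof. by rewrite !(ipC F z) ipDl. Qed.
Lemma ipZr (F : 'M[R]_7) a (x z : 'rV[R]_7) : ip F z (a *: x) = a * ip F z x.
Proof. by rewrite !(ipC F z) ipZl. Qed.

End S.


Section Chol.
Variable R : rcfType.

Definition posdef n (M : 'M[R]_n) :=
  forall v : 'rV[R]_n, v != 0 -> 0 < (v *m M *m v^T) 0 0.

Definition cholP n (M : 'M[R]_n) := 
  exists Q P : 'M[R]_n,
    [/\ is_trig_mx Q^T, is_trig_mx P^T, Q *m P = 1%:M & Q *m M *m Q^T = 1%:M].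

Lemma chol_step n (M : 'M[R]_(1 + n)) : M^T = M -> posdef M ->
  (forall M' : 'M[R]_n, M'^T = M' -> posdef M' -> cholP M') -> cholP M.
Proof.
move=> sM pM IH.
pose M1 : 'M[R]_(1 + n) := M.
have sM1 : M1^T = M1 := sM.
set a := ulsubmx M1; set b := ursubmx M1; set Mp := drsubmx M1.
have eM : M1 = block_mx a b b^T Mp.
  by rewrite -[LHS]submxK /b trmx_ursub sM1.
have sMp : Mp^T = Mp by rewrite /Mp trmx_drsub sM1.
have pMp : posdef Mp.
  move=> v nz.
  have nz' : (row_mx 0 v : 'rV_(1 + n)) != 0 by rewrite row_mx_eq0 eqxx (negbTE nz).
  have := pM _ nz'.
  have -> : (row_mx (0 : 'rV_1) v : 'rV_(1 + n)) *m M1 *m (row_mx (0 : 'rV_1) v)^T = v *m Mp *m v^T.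
    rewrite eM mul_row_block tr_row_mx mul_row_col trmx0 !mul0mx !mulmx0 !add0r.
    by [].
  by [].
have [Q' [P' [tQ tP QP QMQ]]] := IH Mp sMp pMp.
have PQ : P' *m Q' = 1%:M := mulmx1C QP.
have eMp : P' *m P'^T = Mp.
  have : P' *m (Q' *m Mp *m Q'^T) *m P'^T = Mp.
    by rewrite !mulmxA PQ mul1mx -mulmxA -trmx_mul PQ trmx1 mulmx1.
  by rewrite QMQ mulmx1.
set r := - (b *m Q'^T *m Q').
have rMp : r *m Mp = - b.
  rewrite /r -eMp mulNmx; congr (- _).
  rewrite !mulmxA -(mulmxA _ Q' P') QP mulmx1 -mulmxA -trmx_mul PQ trmx1.
  by rewrite mulmx1.
set w : 'rV[R]_(1 + n) := row_mx 1%:M r.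
set s := (w *m M1 *m w^T) 0 0.
have s_gt0 : 0 < s.
  apply: pM; rewrite row_mx_eq0 negb_and; apply/orP; left.
  by rewrite oner_eq0.
set q := (Num.sqrt s)^-1.
have sq_gt0 : 0 < Num.sqrt s by rewrite sqrtr_gt0.
have q_neq0 : q != 0 by rewrite invr_eq0 gt_eqF.
have q2s : q * q * s = 1.
  rewrite /q -expr2 exprVn sqr_sqrtr ?ltW // mulVf // gt_eqF //.
exists (col_mx (q *: w) (row_mx 0 Q')),
       (block_mx q^-1%:M (- (r *m P')) 0 P').
have eQ : col_mx (q *: w) (row_mx 0 Q') = block_mx q%:M (q *: r) 0 Q'.
  by rewrite block_mxEv /w scale_row_mx scalemx1.
split.
- by rewrite eQ tr_block_mx is_trig_block_mx // trmx0 eqxx tQ mx11_is_trig.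
- by rewrite tr_block_mx is_trig_block_mx // trmx0 eqxx tP mx11_is_trig.
- rewrite eQ mulmx_block [RHS]scalar_mx_block !mul0mx !mulmx0 !add0r addr0 QP.
  rewrite mul_scalar_mx -scalemxAl mulmxN scale_scalar_mx mulfV //.
  by rewrite mul_scalar_mx addNr.
rewrite -/M1 mul_col_mx tr_col_mx mul_col_row [RHS]scalar_mx_block.
have wM : w *m M1 = row_mx (a + r *m b^T) 0.
  rewrite eM /w mul_row_block !mul1mx rMp addrN.
  by [].
have BM : row_mx 0 Q' *m M1 = row_mx (Q' *m b^T) (Q' *m Mp).
  by rewrite eM mul_row_block !mul0mx !add0r.
congr block_mx.
- rewrite -scalemxAl -scalemxAl linearZ /= -scalemxAr.
  rewrite [w *m M1 *m w^T]mx11_scalar -/s.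
  by rewrite !scale_scalar_mx mulrA q2s.
- rewrite -scalemxAl -scalemxAl wM tr_row_mx trmx0 mul_row_col mulmx0 mul0mx addr0.
  by rewrite scaler0.
- rewrite BM linearZ /= -scalemxAr /w tr_row_mx mul_row_col trmx1 mulmx1.
  rewrite -mulmxA -[Mp *m r^T]trmxK trmx_mul trmxK sMp rMp linearN /= mulmxN addrN.
  by rewrite scaler0.
- by rewrite BM tr_row_mx trmx0 mul_row_col mulmx0 add0r.
Qed.

Lemma chol n (M : 'M[R]_n) : M^T = M -> posdef M -> cholP M.
Proof.
elim: n M => [|n IH] M sM pM.
  exists 0, 0; split; try (by apply/is_trig_mxP => -[]);
  by apply/matrixP => -[].
exact: (@chol_step n M sM pM IH).
Qed.
End Chol.


Section S.
Variable R : realType.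
Local Notation br := (@n7br R).

Lemma sum_delta (n : nat) (l : 'I_n) (b : 'I_n -> R) :
  \sum_(m < n) (l == m)%:R * b m = b l.
Proof.
rewrite (bigD1 l) //= eqxx mul1r big1 ?addr0 // => m /negbTE.
by rewrite eq_sym => ->; rewrite mul0r.
Qed.

Lemma row_mulE (O F : 'M[R]_7) i : row i (O *m F) = \sum_(l < 7) O i l *: row l F.
Proof.
rewrite row_mul mulmx_sum_row; apply: eq_bigr => l _; by rewrite mxE.
Qed.

Lemma trace_inv (beta : 'rV[R]_7 -> 'rV[R]_7 -> R) (O F : 'M[R]_7) :
  (forall u v w, beta (u + v) w = beta u w + beta v w) ->
  (forall a u w, beta (a *: u) w = a * beta u w) ->
  (forall u v w, beta w (u + v) = beta w u + beta w v) ->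
  (forall a u w, beta w (a *: u) = a * beta w u) ->
  O^T *m O = 1%:M ->
  \sum_(i < 7) beta (row i (O *m F)) (row i (O *m F)) = \sum_(i < 7) beta (row i F) (row i F).
Proof.
move=> Dl Zl Dr Zr OO.
have b0l w : beta 0 w = 0 by rewrite -(scale0r 0) Zl mul0r.
have b0r w : beta w 0 = 0 by rewrite -(scale0r 0) Zr mul0r.
have bsl (f : 'I_7 -> 'rV[R]_7) w : beta (\sum_(l < 7) f l) w = \sum_(l < 7) beta (f l) w.
  exact: (big_morph (fun u => beta u w) (fun u v => Dl u v w) (b0l w)).
have bsr (f : 'I_7 -> 'rV[R]_7) w : beta w (\sum_(l < 7) f l) = \sum_(l < 7) beta w (f l).
  exact: (big_morph (fun u => beta w u) (fun u v => Dr u v w) (b0r w)).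
transitivity (\sum_(i < 7) \sum_(l < 7) \sum_(m < 7) O i l * O i m * beta (row l F) (row m F)).
  apply: eq_bigr => i _.
  rewrite !row_mulE bsl; apply: eq_bigr => l _.
  rewrite Zl bsr mulr_sumr; apply: eq_bigr => m _.
  by rewrite Zr !mulrA.
rewrite exchange_big /=.
apply: eq_bigr => l _.
rewrite exchange_big /=.
transitivity (\sum_(m < 7) (l == m)%:R * beta (row l F) (row m F)); last by rewrite sum_delta.
apply: eq_bigr => m _; rewrite -mulr_suml; congr (_ * _).
have := congr1 (fun A : 'M_7 => A l m) OO.
by rewrite !mxE /= => <-; apply: eq_bigr => i _; rewrite !mxE.
Qed.

Lemma trig_mul n (A B : 'M[R]_n) : is_trig_mx A -> is_trig_mx B -> is_trig_mx (A *m B).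
Proof.
move=> /is_trig_mxP tA /is_trig_mxP tB; apply/is_trig_mxP => i j lij.
rewrite mxE big1 // => k _.
case: (ltnP i k) => [ik|ki]; first by rewrite tA // mul0r.
by rewrite tB ?mulr0 // (leq_ltn_trans ki lij).
Qed.

Lemma trig_diag n (A B : 'M[R]_n) k : is_trig_mx A^T -> is_trig_mx B^T ->
  (A *m B) k k = A k k * B k k.
Proof.
move=> /is_trig_mxP tA /is_trig_mxP tB.
rewrite mxE (bigD1 k) //= big1 ?addr0 // => m /negbTE mk.
case: (ltngtP m k) => [mlk|klm|/val_inj emk]; last by rewrite emk eqxx in mk.
  by have := tA m k mlk; rewrite mxE => ->; rewrite mul0r.
by have := tB k m klm; rewrite mxE => ->; rewrite mulr0.
Qed.

Lemma sqsum_gt0 n (u : 'rV[R]_n) : u != 0 -> 0 < (u *m u^T) 0 0.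
Proof.
move=> nz; have [i ui] : exists i, u 0 i != 0.
  apply/existsP; apply: contraR nz => /existsPn H; apply/eqP/rowP => i.
  by rewrite mxE; apply/eqP; move: (H i); rewrite negbK.
rewrite mxE (bigD1 i) //= !mxE.
have h1 : 0 < u 0 i * u 0 i by rewrite lt_def mulf_neq0 //= -expr2 sqr_ge0.
have h2 : 0 <= \sum_(j < n | j != i) u 0 j * u^T j 0.
  by apply: sumr_ge0 => j _; rewrite mxE -expr2 sqr_ge0.
lra.
Qed.

End S.


Section Main.
Variable R : realType.
Local Notation br := (@n7br R).
Variables (F : 'M[R]_7) (c : R) (D Q P : 'M[R]_7).
Hypothesis Fu : F \in unitmx.
Hypothesis Hder : is_derivation br D.
Hypothesis Hric : forall x, RicOp br F x = c *: x + x *m D.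
Hypothesis tQ : is_trig_mx Q^T.
Hypothesis tP : is_trig_mx P^T.
Hypothesis QP : Q *m P = 1%:M.
Hypothesis QMQ : Q *m (invmx F *m (invmx F)^T) *m Q^T = 1%:M.

Local Notation G := (invmx F).
Local Notation O := (Q *m G).

Lemma PQ : P *m Q = 1%:M. Proof. exact: mulmx1C QP. Qed.

Lemma OtO : O^T *m O = 1%:M.
Proof. apply: mulmx1C; by rewrite trmx_mul !mulmxA -(mulmxA Q) -QMQ. Qed.

Lemma OF : O *m F = Q.
Proof. by rewrite -mulmxA mulVmx // mulmx1. Qed.

Lemma PPt : P *m P^T = G *m G^T.
Proof.
have : P *m (Q *m (G *m G^T) *m Q^T) *m P^T = G *m G^T.
  by rewrite !mulmxA PQ mul1mx -mulmxA -trmx_mul PQ trmx1 mulmx1.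
by rewrite QMQ mulmx1.
Qed.

Definition ipP (x y : 'rV[R]_7) := ((x *m P) *m (y *m P)^T) 0 0.

Lemma ipFQ x y : ip F x y = ipP x y.
Proof.
by rewrite /ip /ipP !trmx_mul -!mulmxA (mulmxA P) PPt !mulmxA.
Qed.


Lemma ricQ x y : ric br F x y =
  - (1/2) * (\sum_(i < 7) ipP (br x (row i Q)) (br y (row i Q)))
  + (1/4) * (\sum_(i < 7) \sum_(j < 7)
               ipP (br (row i Q) (row j Q)) x * ipP (br (row i Q) (row j Q)) y).
Proof.
rewrite ricE.
have T1 : \sum_(i < 7) ip F (br x (row i F)) (br y (row i F)) =
          \sum_(i < 7) ip F (br x (row i Q)) (br y (row i Q)).
  rewrite -OF; symmetry; apply: (@trace_inv R (fun u w => ip F (br x u) (br y w))) => //.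
  - by move=> u v w; rewrite brDr ipDl.
  - by move=> a u w; rewrite brZr ipZl.
  - by move=> u v w; rewrite brDr ipDr.
  - by move=> a u w; rewrite brZr ipZr.
  - exact: OtO.
have T3 : \sum_(i < 7) \sum_(j < 7) ip F (br (row i F) (row j F)) x * ip F (br (row i F) (row j F)) y =
          \sum_(i < 7) \sum_(j < 7) ip F (br (row i Q) (row j Q)) x * ip F (br (row i Q) (row j Q)) y.
  transitivity (\sum_(i < 7) \sum_(j < 7) ip F (br (row i F) (row j Q)) x * ip F (br (row i F) (row j Q)) y).
    apply: eq_bigr => i _.
    rewrite -OF; symmetry.
    apply: (@trace_inv R (fun u w => ip F (br (row i F) u) x * ip F (br (row i F) w) y)).
    - by move=> u v w; rewrite brDr ipDl mulrDl.
    - by move=> a u w; rewrite brZr ipZl mulrA.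
    - by move=> u v w; rewrite brDr ipDl mulrDr.
    - by move=> a u w; rewrite brZr ipZl mulrCA.
    - exact: OtO.
  rewrite exchange_big /= [RHS]exchange_big /=; apply: eq_bigr => j _.
  have H := @trace_inv R (fun u w => ip F (br u (row j Q)) x * ip F (br w (row j Q)) y) O F.
  rewrite OF in H; rewrite H //.
  - by move=> u v w; rewrite brDl ipDl mulrDl.
  - by move=> a u w; rewrite brZl ipZl mulrA.
  - by move=> u v w; rewrite brDl ipDl mulrDr.
  - by move=> a u w; rewrite brZl ipZl mulrCA.
  - exact: OtO.
rewrite T1 T3; congr (_ * _ + _ * _).
  by apply: eq_bigr => i _; rewrite ipFQ.
by apply: eq_bigr => i _; apply: eq_bigr => j _; rewrite !ipFQ.
Qed.

Lemma ricDr x u v : ric br F x (u + v) = ric br F x u + ric br F x v.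
Proof.
rewrite !ricE.
have e1 : \sum_(i < 7) ip F (br x (row i F)) (br (u + v) (row i F)) =
  \sum_(i < 7) ip F (br x (row i F)) (br u (row i F)) + \sum_(i < 7) ip F (br x (row i F)) (br v (row i F)).
  by rewrite -big_split; apply: eq_bigr => i _; rewrite brDl ipDr.
have e2 : \sum_(i < 7) \sum_(j < 7) ip F (br (row i F) (row j F)) x * ip F (br (row i F) (row j F)) (u + v) =
  \sum_(i < 7) \sum_(j < 7) ip F (br (row i F) (row j F)) x * ip F (br (row i F) (row j F)) u +
  \sum_(i < 7) \sum_(j < 7) ip F (br (row i F) (row j F)) x * ip F (br (row i F) (row j F)) v.
  rewrite -big_split; apply: eq_bigr => i _; rewrite -big_split; apply: eq_bigr => j _.
  by rewrite ipDr mulrDr.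
rewrite e1 e2; ring.
Qed.

Lemma ricZr x a u : ric br F x (a *: u) = a * ric br F x u.
Proof.
rewrite !ricE.
have e1 : \sum_(i < 7) ip F (br x (row i F)) (br (a *: u) (row i F)) =
  a * \sum_(i < 7) ip F (br x (row i F)) (br u (row i F)).
  by rewrite mulr_sumr; apply: eq_bigr => i _; rewrite brZl ipZr.
have e2 : \sum_(i < 7) \sum_(j < 7) ip F (br (row i F) (row j F)) x * ip F (br (row i F) (row j F)) (a *: u) =
  a * \sum_(i < 7) \sum_(j < 7) ip F (br (row i F) (row j F)) x * ip F (br (row i F) (row j F)) u.
  rewrite mulr_sumr; apply: eq_bigr => i _; rewrite mulr_sumr; apply: eq_bigr => j _.
  by rewrite ipZr mulrCA.
rewrite e1 e2; ring.
Qed.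

Lemma ric_sumr x (f : 'I_7 -> 'rV[R]_7) :
  ric br F x (\sum_(l < 7) f l) = \sum_(l < 7) ric br F x (f l).
Proof.
have r0 : ric br F x 0 = 0 by rewrite -(scale0r 0) ricZr mul0r.
exact: (big_morph (fun u => ric br F x u) (fun u v => ricDr x u v) r0).
Qed.

Lemma ip_suml (A : 'M[R]_7) (f : 'I_7 -> 'rV[R]_7) w :
  ip A (\sum_(l < 7) f l) w = \sum_(l < 7) ip A (f l) w.
Proof. exact: (big_morph (fun u => ip A u w) (fun u v => ipDl A u v w) (ip0l A w)). Qed.

Lemma ip_sumr (A : 'M[R]_7) (f : 'I_7 -> 'rV[R]_7) w :
  ip A w (\sum_(l < 7) f l) = \sum_(l < 7) ip A w (f l).
Proof. by rewrite ipC ip_suml; apply: eq_bigr => l _; rewrite ipC. Qed.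

Lemma ipFF i l : ip F (row i F) (row l F) = (i == l)%:R.
Proof.
by rewrite /ip -!row_mul mulmxV // !row1 mxE mul1mx !mxE eqxx /= eq_sym.
Qed.

Lemma ric_lin x y : ric br F x y = c * ip F x y + ip F (x *m D) y.
Proof.
have base l : ric br F x (row l F) = c * ip F x (row l F) + ip F (x *m D) (row l F).
  have := congr1 (fun v => ip F v (row l F)) (Hric x).
  rewrite /RicOp /= ipDl ipZl ip_suml => <-.
  rewrite (bigD1 l) //= big1 ?addr0; first by rewrite ipZl ipFF eqxx mulr1.
  by move=> i /negbTE il; rewrite ipZl ipFF il mulr0.
have ey : y = \sum_(l < 7) (y *m G) 0 l *: row l F.
  by rewrite -mulmx_sum_row -mulmxA mulVmx // mulmx1.
rewrite ey ric_sumr !ip_sumr mulr_sumr -big_split; apply: eq_bigr => l _.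
rewrite ricZr !ipZr base /=; ring.
Qed.

Lemma ricC x y : ric br F x y = ric br F y x.
Proof.
rewrite !ricE; congr (_ * _ + _ * _).
  by apply: eq_bigr => i _; rewrite ipC.
by apply: eq_bigr => i _; apply: eq_bigr => j _; rewrite mulrC.
Qed.

Lemma Dsym x y : ip F (x *m D) y = ip F (y *m D) x.
Proof.
have := ric_lin x y; rewrite ricC ric_lin (ipC F y x).
by move/addrI.
Qed.

Local Notation D' := (Q *m D *m P).

Lemma DtrigT : is_trig_mx D^T.
Proof.
apply/is_trig_mxP => i j lij; rewrite mxE; exact: (der_struct Hder).1.
Qed.

Lemma D'trig : is_trig_mx D'^T.
Proof. by rewrite !trmx_mul; apply: trig_mul tP (trig_mul DtrigT tQ). Qed.

Lemma ipP_r u j : ipP u (row j Q) = (u *m P) 0 j.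
Proof.
rewrite /ipP -row_mul QP row1 mxE (bigD1 j) //= big1 ?addr0.
  by rewrite !mxE !eqxx /= mulr1.
by move=> m /negbTE mj; rewrite !mxE /= mj mulr0.
Qed.

Lemma D'entry i j : D' i j = ipP (row i Q *m D) (row j Q).
Proof. by rewrite ipP_r -!row_mul !mxE. Qed.

Lemma D'sym i j : D' i j = D' j i.
Proof. by rewrite !D'entry -!ipFQ Dsym. Qed.

Lemma trE (A : 'M[R]_7) i j : A^T i j = A j i.
Proof. by rewrite mxE. Qed.

Lemma rowE' (A : 'M[R]_7) i j : row i A 0 j = A i j.
Proof. by rewrite mxE. Qed.
Lemma scaleE a (v : 'rV[R]_7) j : (a *: v) 0 j = a * v 0 j.
Proof. by rewrite mxE. Qed.
Lemma mulE (u : 'rV[R]_7) (A : 'M[R]_7) k : (u *m A) 0 k = \sum_(m < 7) u 0 m * A m k.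
Proof. by rewrite mxE. Qed.
Lemma deltaE (i j : 'I_7) : (delta_mx 0 i : 'rV[R]_7) 0 j = (i == j)%:R.
Proof. by rewrite mxE eqxx eq_sym. Qed.

Lemma D'off i j : i != j -> D' i j = 0.
Proof.
move=> nij; have /is_trig_mxP T := D'trig.
case: (ltngtP i j) => [lij|lji|/val_inj eij]; last by rewrite eij eqxx in nij.
  by rewrite D'sym; have := T i j lij; rewrite trE.
by have := T j i lji; rewrite trE.
Qed.

Lemma D'diag k : D' k k = D k k.
Proof.
have QPk : Q k k * P k k = 1.
  by rewrite -trig_diag // QP !mxE eqxx.
rewrite -mulmxA trig_diag //; last by rewrite trmx_mul; apply: trig_mul tP DtrigT.
rewrite trig_diag //; last exact: DtrigT.
by rewrite mulrCA QPk mulr1.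
Qed.

Lemma qD i : row i Q *m D = D i i *: row i Q.
Proof.
have e : row i D' = D i i *: delta_mx 0 i.
  apply/rowP => j; rewrite rowE' scaleE deltaE.
  case: (eqVneq i j) => [<-|nij]; first by rewrite D'diag ?eqxx ?mulr1.
  by rewrite (D'off nij) mulr0.
have : row i (D' *m Q) = D i i *: row i Q by rewrite row_mul e -scalemxAl -rowE.
by rewrite -!mulmxA PQ mulmx1 row_mul.
Qed.

Definition s i j := br (row i Q) (row j Q) *m P.

Lemma grading i j k : s i j 0 k * D k k = (D i i + D j j) * s i j 0 k.
Proof.
have h1 : br (row i Q) (row j Q) *m D = (D i i + D j j) *: br (row i Q) (row j Q).
  by rewrite Hder !qD brZl brZr scalerDl.
have h2 : s i j *m D' = (D i i + D j j) *: s i j.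
  by rewrite /s !mulmxA -(mulmxA _ P Q) PQ mulmx1 h1 scalemxAl.
have := congr1 (fun v : 'rV_7 => v 0 k) h2; rewrite /= (mulE (s i j)) scaleE => <-.
rewrite (bigD1 k) //= big1 ?addr0; first by rewrite D'diag.
by move=> m /negbTE mk; rewrite D'off ?mulr0 // mk.
Qed.

Lemma mulTE (u v : 'rV[R]_7) : (u *m v^T) 0 0 = \sum_(m < 7) u 0 m * v 0 m.
Proof. by rewrite mxE; apply: eq_bigr => m _; rewrite mxE. Qed.

Lemma ric_kk k : ric br F (row k Q) (row k Q) =
  - (1/2) * (\sum_(i < 7) \sum_(m < 7) s k i 0 m ^+ 2)
  + (1/4) * (\sum_(i < 7) \sum_(j < 7) s i j 0 k ^+ 2).
Proof.
rewrite ricQ; congr (_ * _ + _ * _).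
  by apply: eq_bigr => i _; rewrite /ipP mulTE; apply: eq_bigr => m _; rewrite expr2.
by apply: eq_bigr => i _; apply: eq_bigr => j _; rewrite !ipP_r expr2.
Qed.

Lemma ric_kk2 k : ric br F (row k Q) (row k Q) = c + D k k.
Proof.
rewrite ric_lin !ipFQ -D'entry D'diag ipP_r -row_mul QP row1 deltaE eqxx.
by rewrite mulr1.
Qed.

Lemma s_anti i j : s j i = - s i j.
Proof. by rewrite /s brN mulNmx. Qed.

Lemma key (E : 'I_7 -> R) :
  \sum_(k < 7) E k * (c + D k k) =
  1/4 * \sum_(i < 7) \sum_(j < 7) \sum_(k < 7) (E k - E i - E j) * s i j 0 k ^+ 2.
Proof.
set X := \sum_(i < 7) \sum_(j < 7) \sum_(k < 7) E i * s i j 0 k ^+ 2.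
set Y := \sum_(i < 7) \sum_(j < 7) \sum_(k < 7) E j * s i j 0 k ^+ 2.
set Z := \sum_(i < 7) \sum_(j < 7) \sum_(k < 7) E k * s i j 0 k ^+ 2.
have eR : \sum_(i < 7) \sum_(j < 7) \sum_(k < 7) (E k - E i - E j) * s i j 0 k ^+ 2 = Z - X - Y.
  rewrite /X /Y /Z -!sumrB; apply: eq_bigr => i _; rewrite -!sumrB; apply: eq_bigr => j _.
  rewrite -!sumrB; apply: eq_bigr => k _; ring.
have eXY : X = Y.
  rewrite /Y exchange_big /=; apply: eq_bigr => i _; apply: eq_bigr => j _.
  by apply: eq_bigr => k _; rewrite s_anti mxE sqrrN.
have eL : \sum_(k < 7) E k * (c + D k k) = - (1/2) * X + 1/4 * Z.
  transitivity (\sum_(k < 7) (- (1/2) * (E k * \sum_(i < 7) \sum_(m < 7) s k i 0 m ^+ 2)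
        + 1/4 * (E k * \sum_(i < 7) \sum_(j < 7) s i j 0 k ^+ 2))).
    by apply: eq_bigr => k _; rewrite -ric_kk2 ric_kk; ring.
  rewrite big_split /= -!mulr_sumr; congr (_ * _ + _ * _).
    apply: eq_bigr => k _; rewrite mulr_sumr; apply: eq_bigr => i _.
    by rewrite mulr_sumr.
  rewrite /Z; under [RHS]eq_bigr => i _ do rewrite exchange_big /=.
  rewrite [RHS]exchange_big /=; apply: eq_bigr => k _; rewrite mulr_sumr.
  by apply: eq_bigr => i _; rewrite mulr_sumr.
rewrite eL eR -eXY.
lra.
Qed.

Lemma Qz (i a : 'I_7) : (a < i)%N -> Q i a = 0.
Proof. by move=> h; have /is_trig_mxP T := tQ; rewrite -trE T. Qed.
Lemma Pz (i a : 'I_7) : (a < i)%N -> P i a = 0.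
Proof. by move=> h; have /is_trig_mxP T := tP; rewrite -trE T. Qed.

Definition utri (A : 'M[R]_7) : 'M[R]_7 := \matrix_(i, j) (if (j < i)%N then 0 else A i j).
Lemma Qu : utri Q = Q.
Proof. apply/matrixP => i j; rewrite mxE; case: ifP => // h; by rewrite Qz. Qed.
Lemma Pu : utri P = P.
Proof. apply/matrixP => i j; rewrite mxE; case: ifP => // h; by rewrite Pz. Qed.

Lemma QPdiag k : Q k k * P k k = 1.
Proof. by rewrite -trig_diag // QP !mxE eqxx. Qed.

Lemma Qnz k : Q k k != 0.
Proof. by apply/eqP => h; have := QPdiag k; rewrite h mul0r => /eqP; rewrite eq_sym oner_eq0. Qed.
Lemma Pnz k : P k k != 0.
Proof. by apply/eqP => h; have := QPdiag k; rewrite h mulr0 => /eqP; rewrite eq_sym oner_eq0. Qed.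

Lemma sE i j k : s i j 0 k = \sum_(m < 7) brf (row i Q) (row j Q) m * P m k.
Proof. by rewrite /s mulE; apply: eq_bigr => m _; rewrite n7brE. Qed.

Lemma q6c y : br (row o6 Q) y = 0.
Proof.
have Z (a : 'I_7) : (a < 6)%N -> row o6 Q 0 a = 0 by move=> h; rewrite rowE' Qz.
apply/rowP => k; rewrite n7brE mxE; move: k; apply: ord7P; rewrite /brf /=;
 rewrite ?(Z o0 isT) ?(Z o1 isT) ?(Z o2 isT) ?(Z o3 isT) ?(Z o4 isT) ?(Z o5 isT); ring.
Qed.

Lemma s6l j k : s o6 j 0 k = 0.
Proof. by rewrite /s q6c mul0mx mxE. Qed.
Lemma s6r i k : s i o6 0 k = 0.
Proof. by rewrite s_anti mxE s6l oppr0. Qed.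
Lemma brxx x : br x x = 0.
Proof. apply/rowP; apply: ord7P; rewrite n7brE mxE /brf /=; ring. Qed.
Lemma sii i k : s i i 0 k = 0.
Proof. by rewrite /s brxx mul0mx mxE. Qed.

Lemma s0134 : s o0 o1 0 o3 != 0.
Proof.
rewrite sE sum7 /brf /= !rowE' -Qu -Pu !mxE /=.
have h1 := QPdiag o0; have h2 := QPdiag o1; have h3 := QPdiag o3.
rewrite [X in X != 0](_ : _ = Q o0 o0 * Q o1 o1 * P o3 o3); last by ring.
by rewrite !mulf_neq0 ?Qnz ?Pnz.
Qed.

Definition phi (k : 'I_7) : nat :=
  match nat_of_ord k with 0 | 1 => 1 | 2 | 3 => 2 | 4 | 5 => 3 | _ => 4 end%N.
Local Notation t := (D o0 o0).

Lemma Dphi k : D k k = (phi k)%:R * t.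
Proof.
have [_ [h1 [h2 [h3 [h4 [h5 h6]]]]]] := der_struct Hder.
move: k; apply: ord7P; rewrite /phi /= ?h1 ?h2 ?h3 ?h4 ?h5 ?h6; ring.
Qed.

Lemma gz i j k : t != 0 -> phi k != (phi i + phi j)%N -> s i j 0 k = 0.
Proof.
move=> tnz ne; have h := grading i j k; rewrite (Dphi i) (Dphi j) (Dphi k) in h.
have e : s i j 0 k * (t * ((phi k)%:R - (phi i + phi j)%:R)) = 0.
  rewrite natrD.
  transitivity (s i j 0 k * ((phi k)%:R * t) - ((phi i)%:R * t + (phi j)%:R * t) * s i j 0 k).
    by ring.
  by rewrite h subrr.
move/eqP: e; rewrite !mulf_eq0 (negbTE tnz) subr_eq0 eqr_nat (negbTE ne) /= orbF.
by move/eqP.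
Qed.

Lemma sum3_ge0 (f : 'I_7 -> 'I_7 -> 'I_7 -> R) : (forall i j k, 0 <= f i j k) ->
  0 <= \sum_(i < 7) \sum_(j < 7) \sum_(k < 7) f i j k.
Proof. by move=> h; do 3 (apply: sumr_ge0 => ? _). Qed.

Lemma sum3_gt0 (f : 'I_7 -> 'I_7 -> 'I_7 -> R) a b d : (forall i j k, 0 <= f i j k) ->
  0 < f a b d -> 0 < \sum_(i < 7) \sum_(j < 7) \sum_(k < 7) f i j k.
Proof.
move=> h hp; rewrite (bigD1 a) //= (bigD1 b) //= (bigD1 d) //=.
have h1 : 0 <= \sum_(k < 7 | k != d) f a b k by apply: sumr_ge0.
have h2 : 0 <= \sum_(j < 7 | j != b) \sum_(k < 7) f a j k.
  by apply: sumr_ge0 => j _; apply: sumr_ge0.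
have h3 : 0 <= \sum_(i < 7 | i != a) \sum_(j < 7) \sum_(k < 7) f i j k.
  by apply: sumr_ge0 => i _; apply: sumr_ge0 => j _; apply: sumr_ge0.
lra.
Qed.

Lemma t_pos : 0 < t.
Proof.
have S_pos : 0 < \sum_(i < 7) \sum_(j < 7) \sum_(k < 7) s i j 0 k ^+ 2.
  apply: (@sum3_gt0 _ o0 o1 o3) => [i j k|]; first exact: sqr_ge0.
  by rewrite exprn_even_gt0 //= s0134.
have k1 := key (fun _ => 1).
have e1 : \sum_(i < 7) \sum_(j < 7) \sum_(k < 7) (1 - 1 - 1) * s i j 0 k ^+ 2 =
    - \sum_(i < 7) \sum_(j < 7) \sum_(k < 7) s i j 0 k ^+ 2.
  rewrite -sumrN; apply: eq_bigr => i _; rewrite -sumrN; apply: eq_bigr => j _.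
  rewrite -sumrN; apply: eq_bigr => k _; ring.
rewrite e1 sum7 (Dphi o1) (Dphi o2) (Dphi o3) (Dphi o4) (Dphi o5) (Dphi o6) /phi /= in k1.
have k2 := key (fun k => (k == o6)%:R).
have nn : 0 <= \sum_(i < 7) \sum_(j < 7) \sum_(k < 7)
      ((k == o6)%:R - (i == o6)%:R - (j == o6)%:R) * s i j 0 k ^+ 2.
  apply: sum3_ge0 => i j k.
  case: (eqVneq i o6) => [->|ni]; first by rewrite s6l expr0n /= mulr0.
  case: (eqVneq j o6) => [->|nj]; first by rewrite s6r expr0n /= mulr0.
  by rewrite !subr0 mulr_ge0 ?ler0n ?sqr_ge0.
rewrite sum7 (Dphi o1) (Dphi o2) (Dphi o3) (Dphi o4) (Dphi o5) (Dphi o6) /phi /= in k2.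
move: k1 k2 nn S_pos.
set S := \sum_(i < 7) \sum_(j < 7) \sum_(k < 7) s i j 0 k ^+ 2.
set N := \sum_(i < 7) \sum_(j < 7) \sum_(k < 7) _.
move=> k1 k2 nn Sp.
lra.
Qed.

Definition Ef (k : 'I_7) : R :=
  match nat_of_ord k with 0%N => -3 | 1%N => 10 | 2%N => -18 | 3%N => 8 | 4%N => -7 | 5%N => 6 | _ => 4 end.

Lemma term_lt (i j k : 'I_7) : (i < j)%N -> 0 <= (Ef k - Ef i - Ef j) * s i j 0 k ^+ 2.
Proof.
have tnz : t != 0 by rewrite gt_eqF // t_pos.
move: i j k; apply: ord7P; apply: ord7P; apply: ord7P => //= _;
 first [ apply: mulr_ge0; [rewrite /Ef /=; lra | exact: sqr_ge0]
       | by rewrite (gz tnz) ?expr0n /= ?mulr0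
       | rewrite (_ : s _ _ 0 _ = 0) ?expr0n /= ?mulr0 //;
         rewrite sE sum7 /brf /= !rowE' -Qu -Pu !mxE /=; ring ].
Qed.

Lemma term_all (i j k : 'I_7) : 0 <= (Ef k - Ef i - Ef j) * s i j 0 k ^+ 2.
Proof.
case: (ltngtP i j) => [lij|lji|/val_inj eij]; first exact: term_lt.
  rewrite (s_anti j i) mxE sqrrN.
  rewrite (_ : Ef k - Ef i - Ef j = Ef k - Ef j - Ef i); last by ring.
  exact: term_lt.
by rewrite eij sii expr0n /= mulr0.
Qed.

Lemma contra : False.
Proof.
have h := key Ef.
have L : \sum_(k < 7) Ef k * (c + D k k) = 0.
  by rewrite sum7 (Dphi o1) (Dphi o2) (Dphi o3) (Dphi o4) (Dphi o5) (Dphi o6) /Ef /phi /=; ring.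
rewrite L in h.
have pos := @sum3_gt0 (fun i j k => (Ef k - Ef i - Ef j) * s i j 0 k ^+ 2) o0 o1 o3 term_all.
have : 0 < (Ef o3 - Ef o0 - Ef o1) * s o0 o1 0 o3 ^+ 2.
  rewrite mulr_gt0 // ?exprn_even_gt0 //= ?s0134 //.
  by rewrite /Ef /=; lra.
move/pos => {}pos.
lra.
Qed.

End Main.

Theorem mainTheorem4 (R : realType) : ~ einstein_nilradical (@n7br R).
Proof.
move=> [F [Fu [c [D [Hder Hric]]]]].
set M := invmx F *m (invmx F)^T.
have sM : M^T = M by rewrite /M trmx_mul trmxK.
have pM : posdef M.
  move=> v nz.
  have -> : v *m M *m v^T = (v *m invmx F) *m (v *m invmx F)^T.
    by rewrite /M trmx_mul !mulmxA.
  apply: sqsum_gt0; apply: contra_neq nz => h.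
  by rewrite -(mulmxKV Fu v) h mul0mx.
have [Q [P [tQ tP QP QMQ]]] := chol sM pM.
exact: (contra Fu Hder Hric tQ tP QP QMQ).
Qed.
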